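(* Let $G = K_m \otimes K_n$ with $m \geq 3$ and $m \leq n \leq 2m-2$. Then $\dim(G) \geq \left\lceil \frac{2}{3}(m+n-2) \right\rceil$.
   Context: $K_r$ is the complete graph on $r$ vertices. The tensor product $G\otimes H$ has vertex set $V(G)\times V(H)$, with $(u,v)$ adjacent to $(x,y)$ iff $ux\in E(G)$ and $vy\in E(H)$. For a connected graph and an ordered set $W=\{w_1,\dots,w_k\}$ of vertices, $r(v\mid W)=(d(v,w_1),\dots,d(v,w_k))$; $W$ is resolving if distinct vertices have distinct representations; $\dim(G)$ is the minimum size of a resolving set. *)

(* Defs.v *)
From mathcomp Require Import all_boot.
Set Implicit Arguments. Unset Strict Implicit. Unset Printing Implicit Defensive.

Definition complete_graph (r : nat) : rel 'I_r := fun x y => x != y.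
Arguments complete_graph r : clear implicits.

Definition tensor (T1 T2 : finType) (e1 : rel T1) (e2 : rel T2) : rel (T1 * T2) :=
  fun p q => e1 p.1 q.1 && e2 p.2 q.2.

Definition ball (T : finType) (e : rel T) (k : nat) (x : T) : {set T} :=
  iter k (fun S => S :|: [set y | [exists z in S, e z y]]) [set x].

(* Graph distance: least k with y within k steps of x
   (equals #|T| if y is unreachable; in a connected graph it is the usual distance). *)
Definition dist (T : finType) (e : rel T) (x y : T) : nat :=
  find (fun k => y \in ball e k x) (iota 0 #|T|).

Definition resolving (T : finType) (e : rel T) (W : {set T}) : bool :=
  [forall x, forall y, [forall w in W, dist e x w == dist e y w] ==> (x == y)].

(* Metric dimension: minimum size of a resolving set (V itself always resolves). *)
Definition metric_dim (T : finType) (e : rel T) : nat :=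
  \big[minn/#|T|]_(W : {set T} | resolving e W) #|W|.

(* Main.v *)
Require Import Defs.
From mathcomp Require Import all_boot.
From mathcomp Require Import zify.
Set Implicit Arguments. Unset Strict Implicit. Unset Printing Implicit Defensive.

Lemma in_ball0 (T : finType) (e : rel T) x y : (y \in ball e 0 x) = (y == x).
Proof. by rewrite /ball /= inE. Qed.

Lemma in_ballS (T : finType) (e : rel T) k x y :
  (y \in ball e k.+1 x) = (y \in ball e k x) || [exists z in ball e k x, e z y].
Proof. by rewrite /ball iterS in_setU inE. Qed.

Lemma ex_ball0 (T : finType) (e : rel T) x y :
  [exists z in ball e 0 x, e z y] = e x y.
Proof.
apply/existsP/idP => [[z /andP[]]|h]; first by rewrite in_ball0 => /eqP ->.
by exists x; rewrite in_ball0 eqxx.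
Qed.

Lemma avoid2 m (hm : 2 < m) (a b : 'I_m) : exists k : 'I_m, (k != a) && (k != b).
Proof.
apply/existsP; apply: contraT; rewrite negb_exists => /forallP H.
have : [set: 'I_m] \subset [set a; b].
  by apply/subsetP => k _; move: (H k); rewrite !inE negb_and !negbK.
move/subset_leq_card; rewrite cardsT card_ord cards2.
by case: (a != b) => /= h; lia.
Qed.

Definition E m n := tensor (complete_graph m) (complete_graph n).
Arguments E m n : clear implicits.

Lemma find_iota3 (p : pred nat) k :
  find p (iota 0 k.+3) = if p 0 then 0 else if p 1 then 1 else if p 2 then 2
                         else (find p (iota 3 k)).+3.
Proof. by rewrite /=; case: (p 0); case: (p 1); case: (p 2). Qed.

Lemma dist_E m n (hm : 2 < m) (hn : 2 < n) (x w : 'I_m * 'I_n) :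
  dist (E m n) x w = if x == w then 0 else if (x.1 == w.1) || (x.2 == w.2) then 2 else 1.
Proof.
rewrite /dist.
have [k ->] : exists k, #|{: 'I_m * 'I_n}| = k.+3.
  by exists (m * n - 3); rewrite card_prod !card_ord; nia.
rewrite find_iota3 !in_ballS !in_ball0 ex_ball0.
rewrite [w == x]eq_sym.
have ex2 : [exists z in ball (E m n) 1 x, E m n z w].
  have [k1 /andP[k1a k1b]] := avoid2 hm x.1 w.1.
  have [k2 /andP[k2a k2b]] := avoid2 hn x.2 w.2.
  apply/existsP; exists (k1, k2); rewrite in_ballS in_ball0 ex_ball0 /E /tensor /complete_graph /=.
  by rewrite ![x.1 == _]eq_sym ![x.2 == _]eq_sym k1a k1b k2a k2b orbT.
rewrite ex2 !orbT.
have -> : E m n x w = (x.1 != w.1) && (x.2 != w.2) by [].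
have [exw|nxw] := eqVneq x w => //=.
by case: (x.1 == w.1); case: (x.2 == w.2).
Qed.

Definition rowS m n (W : {set 'I_m * 'I_n}) i := [set w in W | w.1 == i].
Definition colS m n (W : {set 'I_m * 'I_n}) j := [set w in W | w.2 == j].

Lemma row0 m n (W : {set 'I_m * 'I_n}) i (h : #|rowS W i| = 0) u :
  u \in W -> (i == u.1) = false.
Proof.
move=> uW; apply/negbTE/negP => /eqP ei.
have : 0 < #|rowS W i| by apply/card_gt0P; exists u; rewrite inE uW -ei eqxx.
by rewrite h.
Qed.

Lemma col0 m n (W : {set 'I_m * 'I_n}) j (h : #|colS W j| = 0) u :
  u \in W -> (j == u.2) = false.
Proof.
move=> uW; apply/negbTE/negP => /eqP ej.
have : 0 < #|colS W j| by apply/card_gt0P; exists u; rewrite inE uW -ej eqxx.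
by rewrite h.
Qed.

Lemma row1 m n (W : {set 'I_m * 'I_n}) a (h : #|rowS W a| = 1) w u :
  w \in W -> w.1 = a -> u \in W -> (a == u.1) = (u == w).
Proof.
move=> wW wa uW; move/eqP/cards1P: h => [z hz].
have hw : w == z by rewrite -in_set1 -hz inE wW wa eqxx.
apply/idP/idP => [/eqP au|/eqP ->]; last by rewrite wa eqxx.
have : u \in [set z] by rewrite -hz inE uW au eqxx.
by rewrite in_set1 (eqP hw).
Qed.

Lemma col1 m n (W : {set 'I_m * 'I_n}) b (h : #|colS W b| = 1) w u :
  w \in W -> w.2 = b -> u \in W -> (b == u.2) = (u == w).
Proof.
move=> wW wb uW; move/eqP/cards1P: h => [z hz].
have hw : w == z by rewrite -in_set1 -hz inE wW wb eqxx.
apply/idP/idP => [/eqP bu|/eqP ->]; last by rewrite wb eqxx.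
have : u \in [set z] by rewrite -hz inE uW bu eqxx.
by rewrite in_set1 (eqP hw).
Qed.

Lemma sep m n (hm : 2 < m) (hn : 2 < n) (W : {set 'I_m * 'I_n}) :
  resolving (E m n) W -> forall x y, x \notin W -> y \notin W ->
  (forall u, u \in W -> ((x.1 == u.1) || (x.2 == u.2)) = ((y.1 == u.1) || (y.2 == u.2))) ->
  x = y.
Proof.
move=> /forallP res x y xW yW H; apply/eqP.
move/forallP: (res x) => /(_ y) /implyP; apply.
apply/forall_inP => u uW; rewrite !dist_E //.
have -> : (x == u) = false by apply: contraNF xW => /eqP ->.
have -> : (y == u) = false by apply: contraNF yW => /eqP ->.
by rewrite H.
Qed.

Lemma sum_b (T : finType) (P : pred T) : \sum_(i : T) (P i : nat) = #|[set i | P i]|.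
Proof.
rewrite -sum1_card [RHS]big_mkcond /=; apply: eq_bigr => i _; rewrite inE.
by case: (P i).
Qed.

Lemma sum_row m n (W : {set 'I_m * 'I_n}) : \sum_(i < m) #|rowS W i| = #|W|.
Proof.
rewrite -sum1_card (partition_big (fun w : 'I_m * 'I_n => w.1) predT) //=.

apply: eq_bigr => i _; rewrite -sum1_card; apply: eq_bigl => w; by rewrite inE.
Qed.

Lemma sum_col m n (W : {set 'I_m * 'I_n}) : \sum_(j < n) #|colS W j| = #|W|.
Proof.
rewrite -sum1_card (partition_big (fun w : 'I_m * 'I_n => w.2) predT) //=.
apply: eq_bigr => i _; rewrite -sum1_card; apply: eq_bigl => w; by rewrite inE.
Qed.

Lemma line_ineq (T : finType) (r : T -> nat) :
  2 * #|T| <= \sum_i r i + #|[set i | r i == 1]| + 2 * #|[set i | r i == 0]|.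
Proof.
rewrite -!sum_b -sum1_card !big_distrr -!big_split /=.
by apply: leq_sum => i _; case: (r i) => [|[|k]].
Qed.

Lemma key m n (hm : 2 < m) (hn : 2 < n) (W : {set 'I_m * 'I_n}) :
  resolving (E m n) W -> 2 * (m + n) <= 3 * #|W| + 4.
Proof.
move=> res; have sepW := sep hm hn res.
pose r i := #|rowS W i|. pose c j := #|colS W j|.
pose R0 := [set i | r i == 0]. pose R1 := [set i | r i == 1].
pose C0 := [set j | c j == 0]. pose C1 := [set j | c j == 1].
pose A := [set w in W | r w.1 == 1]. pose B := [set w in W | c w.2 == 1].
have rowineq : 2 * m <= #|W| + #|R1| + 2 * #|R0|.
  by have := line_ineq r; rewrite card_ord sum_row.
have colineq : 2 * n <= #|W| + #|C1| + 2 * #|C0|.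
  by have := line_ineq c; rewrite card_ord sum_col.
have R1A : #|R1| <= #|A|.
  apply: leq_trans (leq_imset_card (fun w : 'I_m * 'I_n => w.1) A).
  apply: subset_leq_card; apply/subsetP => i; rewrite inE => /eqP ri.
  have : 0 < #|rowS W i| by rewrite -/(r i) ri.
  move/card_gt0P => [w]; rewrite inE => /andP[wW /eqP wi].
  by apply/imsetP; exists w => //; rewrite inE wW wi ri.
have C1B : #|C1| <= #|B|.
  apply: leq_trans (leq_imset_card (fun w : 'I_m * 'I_n => w.2) B).
  apply: subset_leq_card; apply/subsetP => i; rewrite inE => /eqP ri.
  have : 0 < #|colS W i| by rewrite -/(c i) ri.
  move/card_gt0P => [w]; rewrite inE => /andP[wW /eqP wi].
  by apply/imsetP; exists w => //; rewrite inE wW wi ri.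
have AB : #|A| + #|B| <= #|W| + #|A :&: B|.
  rewrite -cardsUI leq_add2r; apply: subset_leq_card; apply/subsetP => w.
  by rewrite !inE => /orP[/andP[]|/andP[]].
have j0 : 'I_n by exists 0; lia.
have i0 : 'I_m by exists 0; lia.
have hR0 : #|R0| <= 1.
  rewrite leqNgt; apply/negP => /card_gt1P [i [i' [iR i'R ne]]].
  move: iR i'R; rewrite !inE => /eqP ri /eqP ri'.
  have e : (i, j0) = (i', j0).
    apply: sepW.
    - by apply/negP => /(row0 ri); rewrite /= eqxx.
    - by apply/negP => /(row0 ri'); rewrite /= eqxx.
    - by move=> u uW /=; rewrite (row0 ri uW) (row0 ri' uW).
  by case: e ne => ->; rewrite eqxx.
have hC0 : #|C0| <= 1.
  rewrite leqNgt; apply/negP => /card_gt1P [j [j' [jC j'C ne]]].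
  move: jC j'C; rewrite !inE => /eqP cj /eqP cj'.
  have e : (i0, j) = (i0, j').
    apply: sepW.
    - by apply/negP => /(col0 cj); rewrite /= eqxx.
    - by apply/negP => /(col0 cj'); rewrite /= eqxx.
    - by move=> u uW /=; rewrite (col0 cj uW) (col0 cj' uW) !orbF.
  by case: e ne => ->; rewrite eqxx.
have hAB : #|A :&: B| <= 1.
  rewrite leqNgt; apply/negP => /card_gt1P [[a b] [[a' b'] []]].
  rewrite !inE => /and3P[/andP[wW /eqP ra] _ /eqP cb] /and3P[/andP[w'W /eqP ra'] _ /eqP cb'] ne.
  simpl in ra, cb, ra', cb'.
  have ne' : (a, b) == (a', b') = false by apply/negbTE.
  have e : (a, b') = (a', b).
    apply: sepW.
    - apply/negP => xW.
      have h1 := row1 ra wW erefl xW; have h2 := col1 cb' w'W erefl xW.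
      move: h1 h2; rewrite /= !eqxx => /esym/eqP[eb] /esym/eqP[ea].
      by move: ne'; rewrite ea eb eqxx.
    - apply/negP => xW.
      have h1 := row1 ra' w'W erefl xW; have h2 := col1 cb wW erefl xW.
      move: h1 h2; rewrite /= !eqxx => /esym/eqP[eb] /esym/eqP[ea].
      by move: ne'; rewrite ea eb eqxx.
    - move=> u uW /=.
      rewrite (row1 ra wW erefl uW) (col1 cb' w'W erefl uW).
      by rewrite (row1 ra' w'W erefl uW) (col1 cb wW erefl uW) orbC.
  case: e => ea eb; by move: ne'; rewrite ea eb eqxx.
have h4 : #|A :&: B| + #|R0| + #|C0| <= 2.
  case: (posnP #|A :&: B|) => [->|/card_gt0P [[a b]]]; first by lia.
  case: (posnP #|R0|) => [->|/card_gt0P [i]]; first by lia.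
  case: (posnP #|C0|) => [->|/card_gt0P [j]]; first by lia.
  rewrite !inE => /eqP cj /eqP ri /and3P[/andP[wW /eqP ra] _ /eqP cb].
  simpl in ra, cb.
  have e : (a, j) = (i, b).
    apply: sepW.
    - by apply/negP => /(col0 cj); rewrite /= eqxx.
    - by apply/negP => /(row0 ri); rewrite /= eqxx.
    - move=> u uW /=.
      rewrite (row1 ra wW erefl uW) (col0 cj uW) (row0 ri uW) (col1 cb wW erefl uW).
      by rewrite orbF.
  case: e => ea _; by have := row0 ri wW; rewrite /= ea eqxx.
lia.
Qed.

Lemma div3_le x y : x <= 3 * y + 2 -> x %/ 3 <= y.
Proof. by move=> h; rewrite -ltnS ltn_divLR //; lia. Qed.

Lemma arith3 s k : 2 * s <= 3 * k + 4 -> 2 * (s - 2) + 2 <= 3 * k + 2.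
Proof. lia. Qed.

(* ceil(2(m+n-2)/3) = (2(m+n-2)+2) %/ 3 in nat *)
Theorem lemma3p5 (m n : nat) :
  3 <= m -> m <= n -> n <= 2 * m - 2 ->
  (2 * (m + n - 2) + 2) %/ 3 <= metric_dim (tensor (complete_graph m) (complete_graph n)).
Proof.
move=> hm hmn _.
have hn : 2 < n by lia.
rewrite /metric_dim; apply: (big_ind (fun k => (2 * (m + n - 2) + 2) %/ 3 <= k)).
- have : m + n <= m * n by nia.
  move=> h; apply: div3_le; rewrite card_prod !card_ord; lia.
- by move=> a b ha hb; rewrite leq_min ha hb.
- move=> W /(key hm hn) h; apply: div3_le; exact: arith3 h.
Qed.
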